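(* Let $M$ be a matroid flock of rank $d$ on a finite set $E$, and let $g=g^M$. Then (1) $g(\alpha)+g(\beta)\ge g(\alpha\vee\beta)+g(\alpha\wedge\beta)$ for all $\alpha,\beta\in\mathbb{Z}^E$; and (2) $g(\alpha+\mathbf{1})=g(\alpha)+d$ for all $\alpha\in\mathbb{Z}^E$.
   Context: $\alpha\vee\beta$ and $\alpha\wedge\beta$ are the coordinatewise maximum and minimum. $e_I:=\sum_{i\in I}e_i$ ($e_i$ unit vectors), $\mathbf{1}:=e_E$. A matroid flock of rank $d$ on $E$ is a map $M$ assigning to each $\alpha\in\mathbb{Z}^E$ a matroid $M_\alpha$ on $E$ of rank $d$ with (MF1) $M_\alpha/i=M_{\alpha+e_i}\setminus i$ for all $\alpha$, $i$ (contraction, deletion); and (MF2) $M_\alpha=M_{\alpha+\mathbf{1}}$. With $r_\alpha$ the rank function of $M_\alpha$, $g^M$ is the unique function $g:\mathbb{Z}^E\to\mathbb{Z}$ with $g(0)=0$ and $g(\alpha+e_I)=g(\alpha)+r_\alpha(I)$ for all $\alpha\in\mathbb{Z}^E$, $I\subseteq E$. *)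

(* Defs.v *)
From mathcomp Require Import all_boot all_order all_algebra.
Set Implicit Arguments. Unset Strict Implicit. Unset Printing Implicit Defensive.
Import Order.TTheory GRing.Theory Num.Theory.
Local Open Scope ring_scope.

Record matroid (E : finType) := Matroid {
  mrank : {set E} -> nat;
  mrank_le_card : forall A, (mrank A <= #|A|)%N;
  mrank_mono : forall A B : {set E}, A \subset B -> (mrank A <= mrank B)%N;
  mrank_submod : forall A B : {set E},
    (mrank (A :|: B) + mrank (A :&: B) <= mrank A + mrank B)%N
}.

(* Rank function of the contraction M/i, on subsets A of E \ {i}. *)
Definition contract_rank (E : finType) (M : matroid E) (i : E) (A : {set E}) : nat :=
  (mrank M (A :|: [set i]) - mrank M [set i])%N.

Definition delete_rank (E : finType) (M : matroid E) (i : E) (A : {set E}) : nat :=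
  mrank M A.

Definition vec (E : finType) := E -> int.
Definition eI (E : finType) (I : {set E}) : vec E := fun x => ((x \in I) : nat)%:Z.
Definition onev (E : finType) : vec E := eI [set: E].
Definition vadd (E : finType) (a b : vec E) : vec E := fun x => a x + b x.
Definition vjoin (E : finType) (a b : vec E) : vec E := fun x => Num.max (a x) (b x).
Definition vmeet (E : finType) (a b : vec E) : vec E := fun x => Num.min (a x) (b x).
Definition vzero (E : finType) : vec E := fun _ => 0.

Definition matroid_flock (E : finType) (d : nat) (M : vec E -> matroid E) : Prop :=
  (forall a, mrank (M a) [set: E] = d) /\
  (* (MF1) M_a / i = M_{a+e_i} \ i, as matroids on E \ {i} *)
  (forall a i (A : {set E}), A \subset ~: [set i] ->
      contract_rank (M a) i A = delete_rank (M (vadd a (eI [set i]))) i A) /\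
  (forall a A, mrank (M a) A = mrank (M (vadd a (@onev E))) A).

Definition is_gM (E : finType) (M : vec E -> matroid E) (g : vec E -> int) : Prop :=
  g (@vzero E) = 0 /\
  forall a I, g (vadd a (eI I)) = g a + (mrank (M a) I)%:Z.

(* Main.v *)
Require Import Defs.
From mathcomp Require Import all_boot all_order all_algebra.
From mathcomp Require Import zify.
From Stdlib Require Import FunctionalExtensionality.
Import Order.TTheory GRing.Theory Num.Theory.
Local Open Scope ring_scope.

Definition vecOf (E : finType) (s : seq E) : vec E := fun e => (count_mem e s)%:Z.
Arguments vecOf {E}.

Lemma vaddA (E : finType) (a b c : vec E) : vadd (vadd a b) c = vadd a (vadd b c).
Proof. apply: functional_extensionality => x; rewrite /vadd addrA. by []. Qed.

Lemma vaddC (E : finType) (a b : vec E) : vadd a b = vadd b a.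
Proof. apply: functional_extensionality => x; by rewrite /vadd addrC. Qed.

Lemma vecOf_nil (E : finType) (a : vec E) : vadd a (vecOf [::]) = a.
Proof. apply: functional_extensionality => x; by rewrite /vadd /vecOf /= addr0. Qed.

Lemma vecOf_cons (E : finType) (j : E) s :
  vecOf (j :: s) = vadd (eI [set j]) (vecOf s).
Proof.
apply: functional_extensionality => x; rewrite /vadd /vecOf /eI /= in_set1 eq_sym.
by rewrite PoszD.
Qed.

Arguments vaddA {E}.
Arguments vaddC {E}.
Arguments vecOf_nil {E}.
Arguments vecOf_cons {E}.
Definition Dg (E : finType) (g : vec E -> int) (c x y : vec E) : int :=
  g (vadd c x) + g (vadd c y) - g c - g (vadd (vadd c x) y).
Arguments Dg {E}.

Lemma DgC (E : finType) g (c x y : vec E) : Dg g c x y = Dg g c y x.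
Proof. rewrite /Dg !vaddA (vaddC x y); lia. Qed.

Lemma DgD (E : finType) g (c x1 x2 y : vec E) :
  Dg g c (vadd x1 x2) y = Dg g c x1 y + Dg g (vadd c x1) x2 y.
Proof. rewrite /Dg -!vaddA; lia. Qed.

Lemma Dg0 (E : finType) g (c x : vec E) : Dg g c x (vecOf [::]) = 0.
Proof. rewrite /Dg !vecOf_nil; lia. Qed.

Arguments DgC {E}.
Arguments DgD {E}.
Arguments Dg0 {E}.
Lemma Dg_local (E : finType) (M : vec E -> matroid E) g
  (hg : forall a I, g (vadd a (eI I)) = g a + (mrank (M a) I)%:Z)
  c (i j : E) : i != j -> 0 <= Dg g c (eI [set i]) (eI [set j]).
Proof.
move=> nij; rewrite /Dg.
have -> : vadd (vadd c (eI [set i])) (eI [set j]) = vadd c (eI [set i; j]).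
  apply: functional_extensionality => x; rewrite /vadd /eI !inE -addrA.
  congr (_ + _); case: (eqVneq x i) => [->|]; first by rewrite (negbTE nij).
  by case: (x == j).
rewrite !hg.
have := mrank_submod (M c) [set i] [set j].
have -> : [set i] :&: [set j] = set0.
  apply/setP => x; rewrite !inE; case: (eqVneq x i) => [->|//].
  by rewrite (negbTE nij).
have := mrank_le_card (M c) set0; rewrite cards0 leqn0 => /eqP ->.


lia.
Qed.

Arguments Dg_local {E M g}.
Lemma DgA (E : finType) (M : vec E -> matroid E) g
  (hg : forall a I, g (vadd a (eI I)) = g a + (mrank (M a) I)%:Z)
  (t : seq E) c i : i \notin t -> 0 <= Dg g c (eI [set i]) (vecOf t).
Proof.
elim: t c => [|j t IH] c; first by rewrite Dg0.
rewrite inE negb_or => /andP [nij nit].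
rewrite vecOf_cons vaddC DgC DgD DgC.
have := IH c nit; have := Dg_local hg (vadd c (vecOf t)) _ _ nij.
rewrite DgC; lia.
Qed.

Arguments DgA {E M g}.
Lemma DgB (E : finType) (M : vec E -> matroid E) g
  (hg : forall a I, g (vadd a (eI I)) = g a + (mrank (M a) I)%:Z)
  (s t : seq E) c : (forall i, i \in s -> i \notin t) ->
  0 <= Dg g c (vecOf s) (vecOf t).
Proof.
elim: s c => [|i s IH] c H; first by rewrite DgC Dg0.
rewrite vecOf_cons DgD.
have h1 := DgA hg t c i (H i (mem_head _ _)).
have h2 := IH (vadd c (eI [set i])) (fun k ks => H k (@mem_behead _ (i :: s) k ks)).
lia.
Qed.

Arguments DgB {E M g}.
Lemma count_flat (E : finType) (n : E -> nat) e :
  count_mem e (flatten [seq nseq (n e') e' | e' <- enum E]) = n e.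
Proof.
rewrite count_flatten -map_comp sumnE big_map big_enum /=.
rewrite (bigD1 e) //= count_nseq /= eqxx mul1n big1 ?addn0 // => k /negbTE.
by rewrite count_nseq /= eq_sym => ->.
Qed.

Theorem mainTheorem12 (E : finType) (d : nat) (M : vec E -> matroid E)
  (g : vec E -> int) :
  matroid_flock d M -> is_gM M g ->
  (forall a b : vec E, g a + g b >= g (vjoin a b) + g (vmeet a b)) /\
  (forall a : vec E, g (vadd a (@onev E)) = g a + d%:Z).
Proof.
move=> [hd _] [_ hg]; split; last first.
  by move=> a; rewrite /onev hg hd.
move=> a b.
pose nx e := absz (Num.max (a e - b e) 0).
pose ny e := absz (Num.max (b e - a e) 0).
pose s := flatten [seq nseq (nx e') e' | e' <- enum E].
pose t := flatten [seq nseq (ny e') e' | e' <- enum E].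
have Hs e : vecOf s e = (nx e)%:Z by rewrite /vecOf count_flat.
have Ht e : vecOf t e = (ny e)%:Z by rewrite /vecOf count_flat.
have ea : a = vadd (vmeet a b) (vecOf s).
  apply: functional_extensionality => x; rewrite /vadd Hs /vmeet /nx; lia.
have eb : b = vadd (vmeet a b) (vecOf t).
  apply: functional_extensionality => x; rewrite /vadd Ht /vmeet /ny; lia.
have ej : vjoin a b = vadd (vadd (vmeet a b) (vecOf s)) (vecOf t).
  apply: functional_extensionality => x; rewrite /vadd Hs Ht /vmeet /vjoin /nx /ny; lia.
have disj : forall i, i \in s -> i \notin t.
  move=> i ins; apply/count_memPn.
  have cs : (count_mem i s != 0)%N by apply/negP => /eqP /count_memPn; rewrite ins.
  move: cs; have := Hs i; have := Ht i; rewrite /vecOf /nx /ny; lia.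
have := DgB hg s t (vmeet a b) disj.
rewrite /Dg -ej -ea -eb; lia.
Qed.
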